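(* Let $r>0$ and let $k\ge3$ be an integer. Set $y_1:=0$ and for integers $0\le m<k$ define $$C_{m,k,r}:=\int_0^\infty\!dy_2\int_{y_2}^\infty\!dy_3\cdots\int_{y_m}^\infty\!dy_{m+1}\,e^{-ry_{m+1}}\int_0^{y_{m+1}+(m+1)}\!dy_{m+2}\int_0^{y_{m+2}+1}\!dy_{m+3}\cdots\int_0^{y_{k-1}+1}\!dy_k$$ (where for $m=0$ the outer integrals are absent and $y_{m+1}=y_1=0$, and for $m=k-1$ the inner integrals are absent). Then $$C_{m,k,r}\le c\Bigl(\frac{2(\mathrm er+1)}{r}\Bigr)^{k-1}(\mathrm er+1)^{-m},\qquad c:=\mathrm e^{2+1/12}/2.$$ *)

(* Defs.v *)
From HB Require Import structures.
From mathcomp Require Import all_boot all_order all_algebra.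
From mathcomp Require Import all_classical all_reals all_analysis.
Set Implicit Arguments. Unset Strict Implicit. Unset Printing Implicit Defensive.
Import Order.TTheory GRing.Theory Num.Theory.
Import numFieldNormedType.Exports.
Local Open Scope classical_set_scope.
Local Open Scope ring_scope.
Local Open Scope ereal_scope.

Section Cmkr.
Variable R : realType.

Fixpoint Finner (n : nat) (y : R) : \bar R :=
  match n with
  | 0%N => 1
  | n'.+1 => \int[@lebesgue_measure R]_(z in `[0%R, (y + 1)%R]) Finner n' z
  end.

(* the inner block  \int_0^{y_{m+1}+(m+1)} dy_{m+2} \int_0^{y_{m+2}+1} ... dy_k,
   i.e. (k-1-m) nested integrals; equal to 1 if m = k-1 *)
Definition innerC (k m : nat) (y : R) : \bar R :=
  match (k - 1 - m)%N with
  | 0%N => 1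
  | n.+1 => \int[@lebesgue_measure R]_(z in `[0%R, (y + (m.+1)%:R)%R]) Finner n z
  end.

Fixpoint outerC (k m : nat) (r : R) (n : nat) (y : R) : \bar R :=
  match n with
  | 0%N => (expR (- (r * y)))%:E * innerC k m y
  | n'.+1 => \int[@lebesgue_measure R]_(z in `[y, +oo[) outerC k m r n' z
  end.

(* C_{m,k,r}, with y_1 = 0 and m outer integrals over y_2, ..., y_{m+1} *)
Definition Cmkr (m k : nat) (r : R) : \bar R := outerC k m r m 0%R.

End Cmkr.

(* Main.v *)
Require Import Defs.
From HB Require Import structures.
From mathcomp Require Import all_boot all_order all_algebra.
From mathcomp Require Import all_classical all_reals all_analysis.
Import Order.TTheory GRing.Theory Num.Theory.
Import numFieldNormedType.Exports.
Local Open Scope classical_set_scope.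
Local Open Scope ring_scope.
From mathcomp Require Import ring lra zify.
Lemma eqA (R : fieldType) (E t w : R) (p q : nat) : t != 0 -> w != 0 ->
  (E/t)^+p * E^+q / (t*w)^+q = (E/t)^+(p+q) / w^+q.
Proof.
move=> h1 h2; rewrite exprD !expr_div_n exprMn.
have h3 : t ^+ p != 0 by rewrite expf_neq0.
have h4 : t ^+ q != 0 by rewrite expf_neq0.
have h5 : w ^+ q != 0 by rewrite expf_neq0.
by field; rewrite h3 h4 h5.
Qed.

Section S.
Variable R : realType.

Lemma dexp (c B z : R) : is_derive z 1 (fun x => B * expR (c * x)) (B * (c * expR (c * z))).
Proof.
have h1 : is_derive z 1 (fun x : R => c * x) c.
  by apply: is_derive_eq; rewrite /GRing.scale/= mulr1.
have h2 := is_derive1_comp (is_derive_expR (c * z)) h1.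
have h3 : is_derive z 1 (fun x => B * (expR \o (fun x => c * x)) x) (B * (expR (c * z) * c)).
  exact: is_deriveZ.
have -> : B * (c * expR (c*z)) = B * (expR (c*z) * c) by rewrite (mulrC c).
exact: h3.
Qed.

Lemma cont_exp (c B : R) : continuous (fun x : R => B * expR (c*x)).
Proof.
move=> z; apply: differentiable_continuous; apply/derivable1_diffP.
by have [] := dexp c B z.
Qed.

Lemma d1exp (c B z : R) : derive1 (fun x => B * expR (c*x)) z = B * (c * expR (c * z)).
Proof. rewrite derive1E; exact: (@derive_val _ _ _ _ _ _ _ (dexp c B z)). Qed.

Lemma int_exp_fin (t B x : R) : 0 < t -> 0 < x ->
  (\int[lebesgue_measure]_(z in `[0%R, x%R]) (B * expR (t * z))%:E =
   ((B / t) * expR (t * x) - (B / t) * expR (t * 0))%:E)%E.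
Proof.
move=> t0 x0.
rewrite EFinB.
apply: (@continuous_FTC2 _ _ (fun z => (B / t) * expR (t * z))) => //.
- by apply: continuous_subspaceT => z; exact: cont_exp.
- split.
  + by move=> z _; have [] := dexp t (B / t) z.
  + by apply: cvg_at_right_filter; exact: cont_exp.
  + by apply: cvg_at_left_filter; exact: cont_exp.
- move=> z _; by rewrite d1exp mulrA divfK // gt_eqF.
Qed.

Lemma int_exp_inf (a B y : R) : 0 < a -> 0 <= B ->
  (\int[lebesgue_measure]_(z in `[y%R, +oo[) (B * expR (- a * z))%:E =
   ((B / a) * expR (- a * y))%:E)%E.
Proof.
move=> a0 B0.
have lim0 : (fun x => (- (B / a)) * expR (- a * x)) x @[x --> +oo%R] --> (0:R).
  rewrite -(mulr0 (- (B / a))).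
  apply: cvgM; first exact: cvg_cst.
  rewrite (_ : (fun x => expR (- a * x)) =
               (fun z => expR (- z)) \o (fun z => a * z)); last first.
    by apply: eq_fun => x; rewrite mulNr.
  apply: (@cvg_comp _ _ _ _ _ _ (pinfty_nbhs R)); last exact: cvgr_expR.
  exact: gt0_cvgMry.
rewrite (@ge0_continuous_FTC2y _ _ (fun x => (- (B / a)) * expR (- a * x)) _ 0).
- by rewrite sub0e -EFinN mulNr opprK.
- by move=> x _; rewrite mulr_ge0 ?expR_ge0.
- by apply: continuous_subspaceT => z; exact: cont_exp.
- exact: lim0.
- by move=> z _; have [] := dexp (- a) (- (B / a)) z.
- by apply: cvg_at_right_filter; exact: cont_exp.
- move=> z _; by rewrite d1exp mulrA mulNr mulrN opprK divfK // gt_eqF.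
Qed.

Lemma leR_eq (a b : R) : a = b -> a <= b. Proof. by move->. Qed.

Local Notation mu := (@lebesgue_measure R).

Lemma le_int_nm (D : set R) (f g : R -> \bar R) :
  (forall x, D x -> (0 <= f x)%E) -> (forall x, D x -> (f x <= g x)%E) ->
  (\int[mu]_(x in D) f x <= \int[mu]_(x in D) g x)%E.
Proof.
move=> f0 fg.
have g0 x : D x -> (0 <= g x)%E by move=> Dx; exact: le_trans (f0 _ Dx) (fg _ Dx).
rewrite ge0_integralE // ge0_integralE //.
apply: le_ereal_sup => _ [h hf <-]; exists h => //= x.
apply: le_trans (hf x) _; rewrite !patchE; case: ifP => // /set_mem Dx.
exact: fg.
Qed.

Lemma Finner_ge0 n (y : R) : (0 <= Finner n y)%E.
Proof.
elim: n y => [|n IH] y /=; first exact: lee01.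
by apply: integral_ge0 => z _; exact: IH.
Qed.

Variable t : R.
Hypothesis t0 : 0 < t.

Lemma Finner_le n (y : R) : 0 <= y ->
  (Finner n y <= ((expR t / t) ^+ n * expR (t * y))%:E)%E.
Proof.
elim: n y => [|n IH] y y0 /=.
  by rewrite expr0 mul1r lee_fin -[1]expR0 ler_expR mulr_ge0 // ltW.
apply: (@le_trans _ _ (\int[mu]_(z in `[0%R, (y + 1)%R]) (((expR t / t) ^+ n) * expR (t * z))%:E)%E).
  apply: le_int_nm => z; rewrite /= in_itv /= => /andP [z0 _]; first exact: Finner_ge0.
  exact: IH.
rewrite int_exp_fin //; last by lra.
rewrite lee_fin mulr0 expR0.
have h : (expR t / t) ^+ n / t * expR (t * (y + 1)) = (expR t / t) ^+ n.+1 * expR (t * y).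
  by rewrite exprSr mulrDr mulr1 expRD; field; rewrite gt_eqF.
rewrite h lerBlDr lerDl.
by rewrite mulr1 divr_ge0 ?exprn_ge0 ?divr_ge0 ?expR_ge0 // ltW.
Qed.

Lemma innerC_ge0 k m (y : R) : (0 <= innerC k m y)%E.
Proof.
rewrite /innerC; case: (k - 1 - m)%N => [|n]; first exact: lee01.
by apply: integral_ge0 => z _; exact: Finner_ge0.
Qed.

Lemma innerC_le k m (y : R) : 0 <= y ->
  (innerC k m y <= ((expR t / t) ^+ (k - 1 - m) * expR t ^+ m * expR (t * y))%:E)%E.
Proof.
move=> y0; rewrite /innerC; case: (k - 1 - m)%N => [|n].
  rewrite expr0 mul1r lee_fin mulr_ege1 // ?exprn_ege1 //.
    by rewrite -[1]expR0 ler_expR ltW.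
  by rewrite -[1]expR0 ler_expR mulr_ge0 // ltW.
apply: (@le_trans _ _ (\int[mu]_(z in `[0%R, (y + (m.+1)%:R)%R]) (((expR t / t) ^+ n) * expR (t * z))%:E)%E).
  apply: le_int_nm => z; rewrite /= in_itv /= => /andP [z0 _]; first exact: Finner_ge0.
  exact: Finner_le.
rewrite int_exp_fin //; last by rewrite ltr_wpDl.
rewrite lee_fin mulr0 expR0.
have h : (expR t / t) ^+ n / t * expR (t * (y + (m.+1)%:R)) =
   (expR t / t) ^+ n.+1 * expR t ^+ m * expR (t * y).
  rewrite mulrDr expRD (mulrC t (m.+1)%:R) expRM_natl.
  by rewrite !exprSr; field; rewrite gt_eqF.
rewrite h lerBlDr lerDl.
by rewrite mulr1 divr_ge0 ?exprn_ge0 ?divr_ge0 ?expR_ge0 // ltW.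
Qed.

Variable r : R.
Hypothesis tr : t < r.

Lemma outerC_ge0 k m n (y : R) : (0 <= outerC k m r n y)%E.
Proof.
elim: n y => [|n IH] y /=.
  by rewrite mule_ge0 ?lee_fin ?expR_ge0 // innerC_ge0.
by apply: integral_ge0 => z _; exact: IH.
Qed.

Lemma outerC_le k m n (y : R) : 0 <= y ->
  (outerC k m r n y <= ((expR t / t) ^+ (k - 1 - m) * expR t ^+ m / (r - t) ^+ n
      * expR (- (r - t) * y))%:E)%E.
Proof.
have rt0 : 0 < r - t by rewrite subr_gt0.
elim: n y => [|n IH] y y0 /=.
  apply: (@le_trans _ _ ((expR (- (r * y)))%:E *
     ((expR t / t) ^+ (k - 1 - m) * expR t ^+ m * expR (t * y))%:E)%E).
    by apply: lee_wpmul2l; [rewrite lee_fin expR_ge0 | exact: innerC_le].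
  rewrite -EFinM lee_fin expr0 divr1.
  have -> : - (r - t) * y = - (r * y) + t * y by ring.
  by rewrite expRD mulrCA.
apply: (@le_trans _ _ (\int[mu]_(z in `[y%R, +oo[)
   ((expR t / t) ^+ (k - 1 - m) * expR t ^+ m / (r - t) ^+ n * expR (- (r - t) * z))%:E)%E).
  apply: le_int_nm => z; rewrite /= in_itv /= andbT => yz; first exact: outerC_ge0.
  by apply: IH; exact: le_trans yz.
rewrite int_exp_inf //; last first.
  by rewrite divr_ge0 ?mulr_ge0 ?exprn_ge0 ?divr_ge0 ?expR_ge0 // ltW.
by rewrite lee_fin exprSr invfM mulrA.
Qed.
End S.

Local Open Scope ereal_scope.

Theorem lemma6 (R : realType) (r : R) (k m : nat) :
  (0 < r)%R -> (3 <= k)%N -> (m < k)%N ->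
  Cmkr m k r <=
  ((expR (2 + 12^-1) / 2) *
   (2 * (expR 1 * r + 1) / r) ^+ (k - 1) *
   (expR 1 * r + 1) ^- m)%:E.
Proof.
move=> r0 k3 mk.
Local Open Scope ring_scope.
set e := expR 1.
have e2 : (2 <= e)%R by have := expR_ge1Dx (1:R); rewrite /e; lra.
set u := e * r + 2.
have u0 : (0 < u)%R by rewrite /u; nra.
set t := r / u.
have t0 : (0 < t)%R by rewrite /t divr_gt0.
have ru : (r < u)%R by rewrite /u; nra.
have t1 : (t < 1)%R by rewrite /t ltr_pdivrMr // mul1r.
have trt : (r - t = t * (e * r + 1))%R by rewrite /t /u; field; rewrite gt_eqF.
have tr : (t < r)%R by rewrite -subr_gt0 trt mulr_gt0 //; nra.
have H := @outerC_le R t t0 r tr k m m 0%R (lexx 0%R).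
rewrite mulr0 expR0 mulr1 in H.
rewrite /Cmkr; apply: le_trans H _; rewrite lee_fin.
have mk1 : (m <= k - 1)%N by lia.
have w0 : 0 < e * r + 1 by nra.
have -> : (expR t / t) ^+ (k - 1 - m) * expR t ^+ m / (r - t) ^+ m =
    (expR t / t) ^+ (k - 1) / (e * r + 1) ^+ m.
  by rewrite trt eqA ?subnK // gt_eqF.
set Q := 2 * (e * r + 1) / r.
have Et : expR t * (1 - t) <= 1.
  have h := expR_ge1Dx (- t); rewrite expRN in h.
  have := ler_wpM2l (ltW (expR_gt0 t)) h.
  by rewrite mulfV ?gt_eqF ?expR_gt0.
have key : 1 <= Q * t * (1 - t).
  have -> : Q * t * (1 - t) = 2 * (e * r + 1) * (u - r) / u ^+ 2.
    by rewrite /Q /t; field; rewrite !gt_eqF.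
  rewrite -subr_ge0.
  have -> : 2 * (e * r + 1) * (u - r) / u ^+ 2 - 1 =
     (2 * (e * r + 1) * (u - r) - u ^+ 2) / u ^+ 2.
    by field; rewrite gt_eqF.
  apply: divr_ge0; last exact: exprn_ge0 (ltW u0).
  rewrite /u.
  have a : 0 <= e * (e - 2) * (r * r) by rewrite !mulr_ge0 ?subr_ge0 //; nra.
  have b : 0 <= (e - 1) * r by rewrite mulr_ge0 //; lra.
  nra.
have hA : expR t / t <= Q.
  rewrite ler_pdivrMr //.
  have := le_trans Et key.
  by rewrite ler_pM2r // subr_gt0.
have c1 : 1 <= expR (2 + 12^-1) / 2 :> R.
  have h1 := expR_ge1Dx (2 + 12^-1 : R).
  have h2 : (0:R) <= 12^-1 by rewrite invr_ge0.
  rewrite ler_pdivlMr //; lra.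
rewrite ler_wpM2r ?invr_ge0 ?exprn_ge0 ?(ltW w0) //.
have Q0 : 0 <= Q by rewrite /Q divr_ge0 ?mulr_ge0 ?(ltW w0) ?(ltW r0).
apply: (@le_trans _ _ (Q ^+ (k - 1))).
  apply: lerXn2r hA; rewrite nnegrE //.
  by rewrite divr_ge0 ?expR_ge0 ?(ltW t0).
by rewrite ler_peMl // exprn_ge0.
Qed.
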